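(* Let $X$ be a BN with full support on the DAG $\mathcal G$ with states $\mathcal A$, $f:\mathcal A\to\mathcal B$ a surjection and $U_v=f(X_v)$, and assume (D3) holds. Then for every vertex $v$ with $depth(v)=1$, all $w,\tilde w\in\mathcal A^{pa(v)}$ with $f(w)=f(\tilde w)$, and all $b\in\mathcal B$, $$\mathbb P(U_v=b\mid X_{pa(v)}=w)=\mathbb P(U_v=b\mid X_{pa(v)}=\tilde w).$$
   Context: $\mathcal G=(V,E)$ is a finite DAG; $pa(v)$ parents; $V_s$ parentless vertices, $V_p=V\setminus V_s$; $depth(v)$ maximal number of edges of a directed path from a vertex of $V_s$ to $v$. A BN on $\mathcal G$ with states $\mathcal A$ (finite) is specified by distributions $\alpha_v$ on $\mathcal A$ for $v\in V_s$ and CPDs $P_v(\cdot\mid a_{pa(v)})$ for $v\in V_p$; law $\prod_{v\in V_s}\alpha_v(x_v)\prod_{v\in V_p}P_v(x_v\mid x_{pa(v)})$; full support: all $x\in\mathcal A^V$ have positive probability. $\mathbb P_{\tilde\alpha}$ is the law with the same CPDs and initial distribution $\tilde\alpha$. $f$ applied coordinatewise. (D3): for every initial distribution $\tilde\alpha$, $(U_v)$ under $\mathbb P_{\tilde\alpha}$ factorises over $\mathcal G$ (law of form $\prod_vq_v(u_v\mid u_{pa(v)})$), and for every $v\in V_p$, $b_v$, $b_{pa(v)}$ the value $\mathbb P_{\tilde\alpha}(U_v=b_v\mid U_{pa(v)}=b_{pa(v)})$ is the same for all $\tilde\alpha$ with $\mathbb P_{\tilde\alpha}(U_{pa(v)}=b_{pa(v)})>0$.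 *)

(* Defs.v *)
From mathcomp Require Import all_boot all_order all_algebra.
Unset Printing Implicit Defensive.
Import Order.TTheory GRing.Theory Num.Theory.
Local Open Scope ring_scope.


Definition edge {V : finType} (pa : V -> {set V}) : rel V := fun u w => u \in pa w.

Definition acyclic {V : finType} (pa : V -> {set V}) : Prop :=
  forall (x : V) (p : seq V), path (edge pa) x p -> last x p = x -> p = [::].

Definition Vs {V : finType} (pa : V -> {set V}) : {set V} := [set v | pa v == set0].

Definition src_path_len {V : finType} (pa : V -> {set V}) (v : V) (k : nat) : Prop :=
  exists (s : V) (p : seq V),
    [/\ s \in Vs pa, size p = k, path (edge pa) s p & last s p = v].

Definition depth_is {V : finType} (pa : V -> {set V}) (v : V) (d : nat) : Prop :=
  src_path_len pa v d /\ forall k, src_path_len pa v k -> (k <= d)%N.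

Definition VSub {V : finType} (S : {set V}) := {u : V | u \in S}.

Definition prj {V : finType} {T : Type} (S : {set V}) (x : {ffun V -> T}) : {ffun VSub S -> T} :=
  [ffun u : VSub S => x (val u)].

Definition is_dist {R : realFieldType} {T : finType} (p : T -> R) : Prop :=
  (forall t, 0 <= p t) /\ \sum_t p t = 1.


Definition law {V A : finType} {R : realFieldType} (pa : V -> {set V}) (alpha : V -> A -> R)
  (P : forall v : V, {ffun VSub (pa v) -> A} -> A -> R) (x : {ffun V -> A}) : R :=
  (\prod_(v in Vs pa) alpha v (x v)) *
  (\prod_(v in ~: Vs pa) P v (prj (pa v) x) (x v)).

Definition prob {V A : finType} {R : realFieldType} (pa : V -> {set V}) (alpha : V -> A -> R)
  (P : forall v : V, {ffun VSub (pa v) -> A} -> A -> R)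
  (E : pred {ffun V -> A}) : R :=
  \sum_(x | E x) law pa alpha P x.

Definition cprob {V A : finType} {R : realFieldType} (pa : V -> {set V}) (alpha : V -> A -> R)
  (P : forall v : V, {ffun VSub (pa v) -> A} -> A -> R)
  (E F : pred {ffun V -> A}) : R :=
  prob pa alpha P (predI E F) / prob pa alpha P F.

Definition init_dist {V A : finType} {R : realFieldType} (pa : V -> {set V}) (alpha : V -> A -> R) : Prop :=
  forall v, v \in Vs pa -> is_dist (alpha v).

Definition cpds {V A : finType} {R : realFieldType} (pa : V -> {set V})
  (P : forall v : V, {ffun VSub (pa v) -> A} -> A -> R) : Prop :=
  forall v, v \notin Vs pa -> forall a, is_dist (P v a).

Definition full_support {V A : finType} {R : realFieldType} (pa : V -> {set V}) (alpha : V -> A -> R)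
  (P : forall v : V, {ffun VSub (pa v) -> A} -> A -> R) : Prop :=
  forall x, 0 < law pa alpha P x.


Definition fmap {V A B : finType} (f : A -> B) (x : {ffun V -> A}) : {ffun V -> B} :=
  [ffun v => f (x v)].

Definition D3 {V A B : finType} {R : realFieldType} (pa : V -> {set V})
  (P : forall v : V, {ffun VSub (pa v) -> A} -> A -> R) (f : A -> B) : Prop :=
  (forall alpha', init_dist pa alpha' ->
     exists q : forall v : V, {ffun VSub (pa v) -> B} -> B -> R,
       (forall v c, is_dist (q v c)) /\
       forall u : {ffun V -> B},
         prob pa alpha' P (fun x => fmap f x == u)
         = \prod_v q v (prj (pa v) u) (u v))
  /\
  (forall v, v \notin Vs pa ->
   forall (bv : B) (bpa : {ffun VSub (pa v) -> B}) alpha1 alpha2,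
     init_dist pa alpha1 -> init_dist pa alpha2 ->
     0 < prob pa alpha1 P (fun x => prj (pa v) (fmap f x) == bpa) ->
     0 < prob pa alpha2 P (fun x => prj (pa v) (fmap f x) == bpa) ->
     cprob pa alpha1 P (fun x => f (x v) == bv)
                       (fun x => prj (pa v) (fmap f x) == bpa)
     = cprob pa alpha2 P (fun x => f (x v) == bv)
                       (fun x => prj (pa v) (fmap f x) == bpa)).

(* Main.v *)
Require Import Defs.
From mathcomp Require Import all_boot all_order all_algebra.
Import Order.TTheory GRing.Theory Num.Theory.
Local Open Scope ring_scope.

Section Graph.
Variable V : finType.
Variable pa : V -> {set V}.
Hypothesis acyc : acyclic pa.

Lemma pigeon_cycle (e : rel V) (c : V -> V) (T : {set V}) x :
  x \in T -> (forall y, y \in T -> (c y \in T) && e y (c y)) ->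
  exists y p, [/\ p != [::], path e y p & last y p = y].
Proof.
move=> xT Hc.
have inT : forall k y, y \in T -> iter k c y \in T.
  by elim=> [|k IH] y yT //=; case/andP: (Hc _ (IH y yT)).
have pth : forall k y, y \in T -> path e y (traject c (c y) k).
  elim=> [|k IH] y yT //=; case/andP: (Hc _ yT) => cT ey.
  by rewrite ey /=; apply: IH.
pose g := fun i : 'I_(#|V|.+1) => iter i c x.
have /injectivePn [i [j ij gij]] : ~~ injectiveb g.
  apply/negP => /injectiveP /leq_card; by rewrite card_ord ltnn.
wlog lij : i j ij gij / (i < j)%N.
  move=> W; case: (ltngtP i j) => h; first exact: (W i j).
  - by apply: (W j i) => //; rewrite eq_sym.
  - have hij : i = j by apply: val_inj.
    by move: ij; rewrite hij eqxx.
exists (iter i c x), (traject c (c (iter i c x)) (j - i)).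
split.
- by move: (subn_gt0 i j); rewrite lij; case: (j - i)%N.
- by apply: pth; apply: inT.
- by rewrite last_traject -iterD subnK ?(ltnW lij).
Qed.

Lemma acyc_flip y p : path (fun z w => edge pa w z) y p -> last y p = y -> p = [::].
Proof.
case: p => [//|q p] Hp Hl.
have := acyc (last y (q :: p)) (rev (belast y (q :: p))).
rewrite rev_path => /(_ Hp).
rewrite Hl /= rev_cons last_rcons => /(_ erefl) /eqP.
by rewrite -size_eq0 size_rcons.
Qed.

Lemma sink_exists (T : {set V}) x : x \in T ->
  exists2 u, u \in T & forall t, t \in T -> u \notin pa t.
Proof.
move=> xT.
case: (boolP [exists u in T, [forall t in T, u \notin pa t]]).
  by case/exists_inP => u uT /forall_inP H; exists u.
rewrite negb_exists_in => /forall_inP H; exfalso.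
pose c u := odflt u [pick t in T | u \in pa t].
have Hc : forall y, y \in T -> (c y \in T) && edge pa y (c y).
  move=> y yT; have := H y yT; rewrite negb_forall_in => /exists_inP [t tT].
  rewrite negbK => ypt; rewrite /c /edge; case: pickP => [t' /andP [H1 H2] /=|].
    by rewrite H1 H2.
  by move/(_ t); rewrite tT ypt.
have [y [p [pn Hp Hl]]] := @pigeon_cycle _ _ _ _ xT Hc.
by move: pn; rewrite (acyc y p Hp Hl).
Qed.

Lemma source_exists (T : {set V}) x : x \in T ->
  exists2 u, u \in T & forall t, t \in T -> t \notin pa u.
Proof.
move=> xT.
case: (boolP [exists u in T, [forall t in T, t \notin pa u]]).
  by case/exists_inP => u uT /forall_inP H; exists u.
rewrite negb_exists_in => /forall_inP H; exfalso.
pose c u := odflt u [pick t in T | t \in pa u].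
have Hc : forall y, y \in T -> (c y \in T) && (fun z w => edge pa w z) y (c y).
  move=> y yT; have := H y yT; rewrite negb_forall_in => /exists_inP [t tT].
  rewrite negbK => ypt; rewrite /c /edge; case: pickP => [t' /andP [H1 H2] /=|].
    by rewrite H1 H2.
  by move/(_ t); rewrite tT ypt.
have [y [p [pn Hp Hl]]] := @pigeon_cycle (fun z w => edge pa w z) _ _ _ xT Hc.
by move: pn; rewrite (acyc_flip y p Hp Hl).
Qed.

Lemma depth1 v : depth_is pa v 1 -> v \notin Vs pa /\ forall u, u \in pa v -> u \in Vs pa.
Proof.
case=> [[s [p [sVs sz Hp Hl]]] Hmax].
split.
  case: p sz Hp Hl => [|q [|//]] //= _ /andP [sq _] qv.
  rewrite inE; apply/set0Pn; exists s; by rewrite -qv.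
move=> u uv; apply/negPn/negP => uNs.
pose T := [set t | (t \notin Vs pa) && connect (edge pa) t u].
have uT : u \in T by rewrite inE uNs connect0.
have [t tT Ht] := source_exists _ _ uT.
move: tT; rewrite inE => /andP [tNs /connectP [q Hq Hql]].
have : pa t != set0 by move: tNs; rewrite inE.
case/set0Pn => s' s't.
have s'Vs : s' \in Vs pa.
  apply/negPn/negP => s'N; have := Ht s'; rewrite s't inE s'N /=.
  have ct : connect (edge pa) t u by apply/connectP; exists q.
  have e1 : edge pa s' t by [].
  by rewrite (connect_trans (connect1 e1) ct) => /(_ isT).
suff : ((size q).+2 <= 1)%N by [].
apply: Hmax.
exists s', (rcons (t :: q) v); split=> //.
- by rewrite size_rcons.
- by rewrite rcons_path /= Hq -Hql /edge s't uv.
- by rewrite last_rcons.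
Qed.
End Graph.

Definition upd {V A : finType} (x : {ffun V -> A}) (u : V) (a : A) : {ffun V -> A} :=
  [ffun z => if z == u then a else x z].
Definition agr {V A : finType} (T : {set V}) (x0 x : {ffun V -> A}) : bool :=
  [forall t, (t \notin T) ==> (x t == x0 t)].

Section SumOut.
Variables (V A : finType) (R : realFieldType) (pa : V -> {set V}).
Variable K : V -> {ffun V -> A} -> R.
Hypothesis H1 : forall u (x y : {ffun V -> A}), (forall z, z \in pa u -> x z = y z) -> x u = y u -> K u x = K u y.
Hypothesis H2 : forall u (x : {ffun V -> A}), \sum_a K u (upd x u a) = 1.
Hypothesis Hsink : forall T : {set V}, forall x, x \in T ->
  exists2 u, u \in T & forall t, t \in T -> u \notin pa t.

Lemma sumout n : forall T : {set V}, #|T| = n -> forall x0,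
  \sum_(x | agr T x0 x) \prod_(u in T) K u x = 1.
Proof.
elim: n => [|n IH] T HT x0.
  rewrite (cards0_eq HT); under eq_bigr do rewrite big_set0.
  rewrite (eq_bigl (pred1 x0)) ?big_pred1_eq // => x /=.
  apply/forallP/eqP => [H|->]; last by move=> t; rewrite eqxx implybT.
  by apply/ffunP => t; apply/eqP; move: (H t); rewrite inE.
have : T != set0 by apply/eqP => T0; move: HT; rewrite T0 cards0.
case/set0Pn => x xT.
have [u uT Hu] := Hsink _ _ xT.
have HT' : #|T :\ u| = n by move: HT; rewrite (cardsD1 u) uT add1n => -[].
rewrite (partition_big (fun x : {ffun V -> A} => x u) (predT : pred A)) //=.
have E : forall a, \sum_(x | agr T x0 x && (x u == a)) \prod_(t in T) K t x
   = \sum_(y | agr (T :\ u) x0 y) \prod_(t in T) K t (upd y u a).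
  move=> a.
  rewrite (reindex_onto (fun y => upd y u a) (fun x => upd x u (x0 u))); last first.
    move=> z /andP [_ /eqP zu]; apply/ffunP => t; rewrite !ffunE.
    by case: (t =P u) => // ->.
  apply: eq_bigl => y; rewrite /agr.
  apply/andP/forallP => [[/andP [/forallP H _] /eqP E] t | H].
    rewrite in_setD1 negb_and negbK; case tu: (t == u) => /=.
      move/eqP: tu => ->; have := f_equal (fun g : {ffun V -> A} => g u) E; rewrite !ffunE eqxx => <-.
      by rewrite eqxx.
    by have := H t; rewrite ffunE tu.
  split; first (apply/andP; split).
  - apply/forallP => t; apply/implyP => tT; rewrite ffunE.
    have tu : (t == u) = false by apply/negP => /eqP tu; move: tT; rewrite tu uT.
    rewrite tu; have := H t; rewrite in_setD1 negb_and tT orbT //.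
  - by rewrite ffunE eqxx.
  - apply/eqP/ffunP => t; rewrite !ffunE; case: (t =P u) => // ->.
    by have := H u; rewrite in_setD1 eqxx /= => /eqP ->.
rewrite (eq_bigr _ (fun a _ => E a)) exchange_big /=.
rewrite -[RHS](IH _ HT' x0); apply: eq_bigr => y _.
have Hp : forall a, \prod_(t in T :\ u) K t (upd y u a) = \prod_(t in T :\ u) K t y.
  move=> a; apply: eq_bigr => t; rewrite in_setD1 => /andP [tu tT].
  apply: H1; last by rewrite ffunE (negbTE tu).
  move=> z zt; rewrite ffunE; case: (z =P u) => // zu.
  by move: (Hu t tT); rewrite -zu zt.
under eq_bigr => a _ do rewrite (big_setD1 _ uT) Hp.
by rewrite -big_distrl /= H2 mul1r.
Qed.
End SumOut.

Definition ext {V A : finType} {S : {set V}} (d : A) (w : {ffun VSub S -> A}) (z : V) : A :=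
  odflt d (omap w (insub z)).

Lemma ext_val {V A : finType} {S : {set V}} (d : A) (w : {ffun VSub S -> A}) (s : VSub S) :
  ext d w (val s) = w s.
Proof. by rewrite /ext valK. Qed.

Section Marg.
Variables (V A : finType) (R : realFieldType) (pa : V -> {set V}).
Variables (alpha : V -> A -> R) (P : forall v : V, {ffun VSub (pa v) -> A} -> A -> R).
Hypothesis acyc : acyclic pa.
Hypothesis Hinit : init_dist pa alpha.
Hypothesis Hcpd : cpds pa P.

Definition Kf (u : V) (x : {ffun V -> A}) : R :=
  if u \in Vs pa then alpha u (x u) else P u (prj (pa u) x) (x u).

Lemma law_K x : law pa alpha P x = \prod_u Kf u x.
Proof.
rewrite /law [RHS](bigID (mem (Vs pa))) /=; congr (_ * _).
  by apply: eq_big => // u uV; rewrite /Kf uV.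
by apply: eq_big => [u|u]; rewrite ?inE // => uV; rewrite /Kf inE (negbTE uV).
Qed.

Lemma Kf_H1 u (x y : {ffun V -> A}) : (forall z, z \in pa u -> x z = y z) -> x u = y u -> Kf u x = Kf u y.
Proof.
move=> Hz Hu; rewrite /Kf Hu; case: ifP => // _; congr (P _ _ _).
by apply/ffunP => s; rewrite !ffunE; apply: Hz; apply: valP.
Qed.

Lemma notin_self u : u \notin pa u.
Proof.
apply/negP => uu; have := acyc u [:: u]; rewrite /= /edge uu => /(_ isT erefl) //.
Qed.

Lemma Kf_H2 u (x : {ffun V -> A}) : \sum_a Kf u (upd x u a) = 1.
Proof.
rewrite /Kf; have [uV|uV] := boolP (u \in Vs pa).
  under eq_bigr => a _ do rewrite ffunE eqxx.
  by case: (Hinit u uV).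
have Hpr : forall a, prj (pa u) (upd x u a) = prj (pa u) x.
  move=> a; apply/ffunP => s; rewrite !ffunE; case: eqP => // su.
  by have := valP s; rewrite su (negbTE (notin_self u)).
under eq_bigr => a _ do rewrite Hpr ffunE eqxx.
by case: (Hcpd u uV (prj (pa u) x)).
Qed.

Lemma law_split (C : {set V}) x :
  \prod_u Kf u x = \prod_(u in C) Kf u x * \prod_(u in ~: C) Kf u x.
Proof.
rewrite (bigID (mem C)) /=; congr (_ * _).
by apply: eq_bigl => u; rewrite inE.
Qed.

Variable v : V.
Hypothesis vNs : v \notin Vs pa.
Hypothesis paS : forall u, u \in pa v -> u \in Vs pa.
Variable d : A.

Lemma v_notin : v \notin pa v.
Proof. by apply/negP => /paS; rewrite (negbTE vNs). Qed.

Lemma marg (w : {ffun VSub (pa v) -> A}) a :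
  prob pa alpha P (fun x => (prj (pa v) x == w) && (x v == a))
  = (\prod_(u in pa v) alpha u (ext d w u)) * P v w a.
Proof.
pose C := v |: pa v.
pose x0 := upd [ffun z => ext d w z] v a.
have x0v : x0 v = a by rewrite ffunE eqxx.
have x0u : forall u, u \in pa v -> x0 u = ext d w u.
  move=> u uv; rewrite !ffunE; case: eqP => // uv'.
  by move: v_notin; rewrite -{1}uv' uv.
have prjx0 : prj (pa v) x0 = w.
  by apply/ffunP => s; rewrite ffunE x0u ?ext_val //; apply: valP.
rewrite /prob (eq_bigl (agr (~: C) x0)); last first.
  move=> x; apply/andP/forallP => [[/eqP Hw /eqP Hv] t | H].
    rewrite inE negbK; apply/implyP; rewrite in_setU1 => /orP [/eqP ->|tv].
      by rewrite Hv x0v.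
    rewrite x0u //; have := f_equal (fun g : {ffun VSub (pa v) -> A} => g (exist _ t tv)) Hw.
    by rewrite ffunE /= -(ext_val d w (exist _ t tv)) /= => ->.
  have Ht : forall t, t \in C -> x t = x0 t.
    by move=> t tC; apply/eqP; move: (H t); rewrite inE negbK tC.
  split; last by rewrite Ht ?x0v // setU11.
  apply/eqP/ffunP => s; rewrite ffunE Ht; last by rewrite in_setU1 (valP s) orbT.
  by rewrite x0u ?ext_val //; apply: valP.
have Hagr : forall x, agr (~: C) x0 x -> forall t, t \in C -> x t = x0 t.
  by move=> x H t tC; apply/eqP; move/forallP: H => /(_ t); rewrite inE negbK tC.
have HC : forall x, agr (~: C) x0 x -> \prod_(u in C) Kf u x = \prod_(u in C) Kf u x0.
  move=> x H; apply: eq_bigr => u uC; apply: Kf_H1; last exact: Hagr.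
  move=> z zu; apply: (Hagr _ H); move: uC; rewrite in_setU1 => /orP [/eqP uv|uv].
    by rewrite in_setU1 -uv zu orbT.
  by move: (paS u uv); rewrite inE => /eqP pu0; move: zu; rewrite pu0 inE.
under eq_bigr => x Hx do rewrite law_K (law_split C) (HC x Hx).
rewrite -big_distrr /=.
rewrite (@sumout V A R pa Kf Kf_H1 Kf_H2 _ #|~: C|) // ?mulr1; last first.
  by move=> T x xT; exact: (@sink_exists _ _ acyc T x xT).
rewrite big_setU1 /= ?v_notin // mulrC; congr (_ * _).
  by apply: eq_bigr => u uv; rewrite /Kf (paS u uv) x0u.
by rewrite /Kf (negbTE vNs) prjx0 x0v.
Qed.
End Marg.

Section Main.
Variables (V A B : finType) (R : realFieldType) (pa : V -> {set V}).
Variable (P : forall v : V, {ffun VSub (pa v) -> A} -> A -> R) (f : A -> B).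
Hypothesis acyc : acyclic pa.
Hypothesis Hcpd : cpds pa P.
Variable v : V.
Hypothesis vNs : v \notin Vs pa.
Hypothesis paS : forall u, u \in pa v -> u \in Vs pa.
Variables (d : A) (b : B).

Definition g (w : {ffun VSub (pa v) -> A}) := \sum_(a | f a == b) P v w a.
Definition G (alpha : V -> A -> R) (w : {ffun VSub (pa v) -> A}) :=
  \prod_(u in pa v) alpha u (ext d w u).

Lemma probN alpha (w : {ffun VSub (pa v) -> A}) : init_dist pa alpha ->
  prob pa alpha P (predI (fun x : {ffun V -> A} => f (x v) == b) (fun x : {ffun V -> A} => prj (pa v) x == w)) = G alpha w * g w.
Proof.
move=> Hi; rewrite /prob (partition_big (fun x : {ffun V -> A} => x v) (fun a => f a == b)) /=;
  last by move=> x /andP [].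
rewrite /g big_distrr /=; apply: eq_bigr => a fa.
rewrite -(@marg V A R pa alpha P acyc Hi Hcpd v vNs paS d w a); apply: eq_bigl => x /=.
by case: (x v =P a) => [->|]; rewrite ?fa ?andbF ?andbT.
Qed.

Lemma probD alpha (w : {ffun VSub (pa v) -> A}) : init_dist pa alpha ->
  prob pa alpha P (fun x : {ffun V -> A} => prj (pa v) x == w) = G alpha w.
Proof.
move=> Hi; rewrite /prob (partition_big (fun x : {ffun V -> A} => x v) predT) //=.
have [Hn Hs] := Hcpd v vNs w.
rewrite -[RHS]mulr1 -Hs big_distrr /=; apply: eq_bigr => a _.
by rewrite -(@marg V A R pa alpha P acyc Hi Hcpd v vNs paS d w a).
Qed.

Lemma law_ge0 alpha x : init_dist pa alpha -> 0 <= law pa alpha P x.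
Proof.
move=> Hi; rewrite /law; apply: mulr_ge0; apply: prodr_ge0 => u.
  by move=> uV; case: (Hi u uV).
by rewrite inE => uV; case: (Hcpd u uV (prj (pa u) x)).
Qed.

Definition alpha1 (alpha : V -> A -> R) (w : {ffun VSub (pa v) -> A}) (u : V) (a : A) : R :=
  if u \in pa v then (a == ext d w u)%:R else alpha u a.

Lemma init1 alpha w : init_dist pa alpha -> init_dist pa (alpha1 alpha w).
Proof.
move=> Hi u uV; rewrite /alpha1; case: (boolP (u \in pa v)) => _; last exact: Hi.
split; first by move=> a; rewrite ler0n.
rewrite (bigD1 (ext d w u)) //= eqxx big1 ?addr0 // => a /negbTE -> //.
Qed.

Lemma G1 alpha w : G (alpha1 alpha w) w = 1.
Proof. by rewrite /G; apply: big1 => u uv; rewrite /alpha1 uv eqxx. Qed.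

Lemma law1_0 alpha w x : prj (pa v) x != w -> law pa (alpha1 alpha w) P x = 0.
Proof.
move=> Hx.
have [s Hs] : exists s : VSub (pa v), x (val s) != w s.
  apply/existsP; move: Hx; apply: contraR; rewrite negb_exists => /forallP H.
  by apply/eqP/ffunP => s; rewrite ffunE; apply/eqP; move: (H s); rewrite negbK.
rewrite /law (bigD1 (val s)) /=; last exact: paS (valP s).
by rewrite {1}/alpha1 (valP s) ext_val (negbTE Hs) !mul0r.
Qed.

Lemma prob1_eq alpha w (Q1 Q2 : pred {ffun V -> A}) :
  (forall x, prj (pa v) x == w -> Q1 x = Q2 x) ->
  prob pa (alpha1 alpha w) P Q1 = prob pa (alpha1 alpha w) P Q2.
Proof.
move=> H; rewrite /prob [LHS]big_mkcond [RHS]big_mkcond; apply: eq_bigr => x _.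
case: (boolP (prj (pa v) x == w)) => [/H -> //|/law1_0 ->].
by case: (Q1 x); case: (Q2 x).
Qed.

Lemma cprob1 alpha (w : {ffun VSub (pa v) -> A}) (bw : {ffun VSub (pa v) -> B}) :
  init_dist pa alpha -> [ffun u => f (w u)] = bw ->
  cprob pa (alpha1 alpha w) P (fun x : {ffun V -> A} => f (x v) == b)
        (fun x : {ffun V -> A} => prj (pa v) (fmap f x) == bw) = g w /\
  0 < prob pa (alpha1 alpha w) P (fun x : {ffun V -> A} => prj (pa v) (fmap f x) == bw).
Proof.
move=> Hi Hbw.
have HF : forall x, prj (pa v) x == w -> prj (pa v) (fmap f x) == bw.
  move=> x /eqP Hx; rewrite -Hbw -Hx; apply/eqP/ffunP => s; by rewrite !ffunE.
have Hi1 := init1 alpha w Hi.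
have E1 : prob pa (alpha1 alpha w) P (fun x : {ffun V -> A} => prj (pa v) (fmap f x) == bw) = 1.
  rewrite (@prob1_eq alpha w _ (fun x : {ffun V -> A} => prj (pa v) x == w)).
    by rewrite probD // G1.
  by move=> x Hx; rewrite Hx HF.
split; last by rewrite E1 ltr01.
rewrite /cprob E1 divr1.
rewrite (@prob1_eq alpha w _ (predI (fun x : {ffun V -> A} => f (x v) == b) (fun x : {ffun V -> A} => prj (pa v) x == w))).
  by rewrite probN // G1 mul1r.
by move=> x Hx /=; rewrite Hx HF.
Qed.

End Main.


Theorem mainTheorem12 (V A B : finType) (R : realFieldType)
  (pa : V -> {set V}) (alpha : V -> A -> R)
  (P : forall v : V, {ffun VSub (pa v) -> A} -> A -> R) (f : A -> B) :
  acyclic pa ->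
  init_dist pa alpha ->
  cpds pa P ->
  full_support pa alpha P ->
  (forall b : B, exists a : A, f a = b) ->
  D3 pa P f ->
  forall v : V, depth_is pa v 1 ->
  forall (w w' : {ffun VSub (pa v) -> A}),
    [ffun u => f (w u)] = [ffun u => f (w' u)] ->
  forall b : B,
    cprob pa alpha P (fun x => f (x v) == b) (fun x => prj (pa v) x == w)
    = cprob pa alpha P (fun x => f (x v) == b) (fun x => prj (pa v) x == w').
Proof.
move=> acyc Hinit Hcpd Hfull Hsurj [_ HD3] v Hdep w w' Hww' b.
have [vNs paS] := @depth1 _ _ acyc _ Hdep.
have [d _] := Hsurj b.
have Horig : forall w0 : {ffun VSub (pa v) -> A},
    cprob pa alpha P (fun x => f (x v) == b) (fun x => prj (pa v) x == w0)
    = g _ _ _ _ _ P f v b w0.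
  move=> w0; rewrite /cprob (@probN _ _ _ _ _ _ _ acyc Hcpd _ vNs paS d b _ _ Hinit).
  rewrite (@probD _ _ _ _ _ acyc Hcpd _ vNs paS d _ w0 Hinit).
  have Gpos : 0 < G _ _ _ pa v d alpha w0.
    rewrite -(@probD _ _ _ _ _ acyc Hcpd _ vNs paS d _ w0 Hinit).
    pose x1 : {ffun V -> A} := [ffun z => ext d w0 z].
    have Hx1 : prj (pa v) x1 == w0.
      by apply/eqP/ffunP => s; rewrite !ffunE ext_val.
    rewrite /prob (bigD1 x1) //=; apply: ltr_wpDr; last exact: Hfull.
    by apply: sumr_ge0 => x _; exact: law_ge0.
  by rewrite [_ * g _ _ _ _ _ _ _ _ _ _]mulrC mulfK ?gt_eqF.
rewrite !Horig.
pose bw : {ffun VSub (pa v) -> B} := [ffun u => f (w u)].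
have [E1 P1] := @cprob1 _ _ _ _ _ _ _ acyc Hcpd _ vNs paS d b _ w bw Hinit erefl.
have [E2 P2] := @cprob1 _ _ _ _ _ _ _ acyc Hcpd _ vNs paS d b _ w' bw Hinit (esym Hww').
rewrite -E1 -E2; apply: HD3 => //; exact: init1.
Qed.
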